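(* Let $(P,Q)$ be a solution of the Cucker–Smale model with velocity control described in the context, let $l\in[N]$ and $[l]=\{1,\dots,l\}$. Then, for $t>0$ (wherever the derivative of $t\mapsto\|P(t)\|_{[l]}$ exists), the following differential inequalities hold: (1) \[ \frac{d}{dt}\|P\|_{[l]}\le-\frac{\kappa\mathcal M l}{N}\psi(\|Q\|_{[l]})\|P\|_{[l]}+\frac{2\kappa M_{G'}(N-l)P^0_M L_{\psi,[l]}}{N}\|Q\|_{[l]}, \] where \[ L_{\psi,[l]}(t):=\sup_{\substack{r,s\ge q_{[l]}(t)\\ r\ne s}}\left|\frac{\psi(r)-\psi(s)}{r-s}\right|<\infty,\qquad q_{[l]}(t):=\min_{i'\in[l],\,j'\notin[l]}|q_{i'}(t)-q_{j'}(t)| \] (when $l=N$ the second term is absent since $N-l=0$); (2) \[ \frac{d}{dt}\|P\|_{[l]}\le-\frac{\kappa\mathcal M l}{N}\psi(\|Q\|_{[l]})\|P\|_{[l]}+\frac{4\kappa P^0_M M_{G'}l(N-l)}{N}\max_{i'\in[l],\,j'\notin[l]}\psi(|q_{i'}-q_{j'}|). \]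
   Context: Let $N\ge1$, $d\ge1$, $\kappa>0$, $[N]=\{1,\dots,N\}$. The velocity control function $G:\mathbb R^d\to\mathbb R^d$ is $G(p)=g(|p|)\,p/|p|$ for $p\ne0$, $G(0)=0$, with $g\in C^1([0,\infty))$, $g(0)=0$, $0<m\le g'\le M$ on every compact interval (constants depending on the interval), and $g$ convex or concave on $(0,\infty)$. The kernel $\psi:(0,\infty)\to(0,\infty)$ is bounded, Lipschitz continuous and nonincreasing. The model is, for $i\in[N]$, $t>0$: \[ \dot q_i=G(p_i),\qquad \dot p_i=\frac{\kappa}{N}\sum_{k=1}^N\psi(|q_k-q_i|)\big(G(p_k)-G(p_i)\big),\qquad (q_i,p_i)(0)=(q_i^0,p_i^0)\in\mathbb R^d\times\mathbb R^d. \] Notation: for $S\subset[N]$, $\|Q\|_S^2=\sum_{i,j\in S}|q_i-q_j|^2$, $\|P\|_S^2=\sum_{i,j\in S}|p_i-p_j|^2$; $P^0_M=\max_i|p_i^0|$, $M_{G'}=\max\{g'(r):0\le r\le P^0_M\}$, $m_{G'}=\min\{g'(r):0\le r\le P^0_M\}$, $\mathcal M=\min\{m_{G'},\,m_{G'}^2/M_{G'}\}$. *)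

(* Defs.v *)
From HB Require Import structures.
From mathcomp Require Import all_boot all_order all_algebra.
From mathcomp Require Import all_classical all_reals all_analysis.
Set Implicit Arguments. Unset Strict Implicit. Unset Printing Implicit Defensive.
Import Order.TTheory GRing.Theory Num.Theory.
Import numFieldNormedType.Exports.
Local Open Scope classical_set_scope.
Local Open Scope ring_scope.

Section CSdefs.
Variable R : realType.

Definition enorm (d : nat) (p : 'rV[R]_d) : R :=
  Num.sqrt (\sum_(k < d) (p 0 k) ^+ 2).

Definition Gvel (g : R -> R) (d : nat) (p : 'rV[R]_d) : 'rV[R]_d :=
  if p == 0 then 0 else (g (enorm p) / enorm p) *: p.

(* ||X||_[l] = sqrt( sum_{i,j in [l]} |x_i - x_j|^2 ), [l] = indices i with val i < l
   (0-based indexing of [l] = {1,...,l}). *)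
Definition normS (N d : nat) (l : nat) (x : 'I_N -> 'rV[R]_d) : R :=
  Num.sqrt (\sum_(i < N | (i < l)%N) \sum_(j < N | (j < l)%N)
              (enorm (x i - x j)) ^+ 2).

Definition qmin (N d : nat) (l : nat) (x : 'I_N -> 'rV[R]_d) : R :=
  inf [set enorm (x i - x j) | i in [set i : 'I_N | (i < l)%N] & j in [set j : 'I_N | (l <= j)%N]].

Definition Lpsi (psi : R -> R) (a : R) : R :=
  sup [set z | exists r s : R,
         [/\ a <= r, a <= s, r <> s & z = `|(psi r - psi s) / (r - s)|]].

(* max_{i in [l], j notin [l]} psi(|q_i - q_j|)  (psi > 0, so the default 0 is harmless;
   it only matters when l = N, where the term is multiplied by N - l = 0). *)
Definition psimax (psi : R -> R) (N d : nat) (l : nat) (x : 'I_N -> 'rV[R]_d) : R :=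
  \big[Num.max/0]_(i < N | (i < l)%N) \big[Num.max/0]_(j < N | (l <= j)%N)
     psi (enorm (x i - x j)).

Definition PM (N d : nat) (p0 : 'I_N -> 'rV[R]_d) : R :=
  \big[Num.max/0]_(i < N) enorm (p0 i).

Definition convex_on_pos (g : R -> R) : Prop :=
  forall x y (t : R), 0 < x -> 0 < y -> 0 <= t <= 1 ->
    g ((1 - t) * x + t * y) <= (1 - t) * g x + t * g y.
Definition concave_on_pos (g : R -> R) : Prop :=
  forall x y (t : R), 0 < x -> 0 < y -> 0 <= t <= 1 ->
    (1 - t) * g x + t * g y <= g ((1 - t) * x + t * y).

End CSdefs.

(* Main.v *)
Require Import Defs.
From HB Require Import structures.
From mathcomp Require Import all_boot all_order all_algebra.
From mathcomp Require Import all_classical all_reals all_analysis.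
From mathcomp Require Import ring lra.
Import Order.TTheory GRing.Theory Num.Theory.
Import numFieldNormedType.Exports.
Local Open Scope classical_set_scope.
Local Open Scope ring_scope.


Section CS.
Context {R : realType}.

Lemma CS_sum (I : finType) (P : pred I) (x y : I -> R) :
  \sum_(i | P i) x i * y i <=
  Num.sqrt (\sum_(i | P i) x i ^+ 2) * Num.sqrt (\sum_(i | P i) y i ^+ 2).
Proof.
set A := \sum_(i | P i) x i ^+ 2; set B := \sum_(i | P i) y i ^+ 2.
set C := \sum_(i | P i) x i * y i.
have A0 : 0 <= A by apply: sumr_ge0 => i _; exact: sqr_ge0.
have B0 : 0 <= B by apply: sumr_ge0 => i _; exact: sqr_ge0.
suff key : C ^+ 2 <= A * B.
  rewrite -sqrtrM //; apply: le_trans (ler_norm C) _.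
  by rewrite -sqrtr_sqr ler_sqrt // mulr_ge0.
have [Az|Ap] := eqVneq A 0.
  have x0 : forall i, P i -> x i = 0.
    move=> i Pi; apply/eqP; rewrite -sqrf_eq0; apply/eqP.
    by apply: (psumr_eq0P _ Az) => // j _; exact: sqr_ge0.
  have -> : C = 0 by rewrite /C big1 // => i Pi; rewrite x0 // mul0r.
  by rewrite expr0n /= mulr_ge0.
have Ap' : 0 < A by rewrite lt_def Ap A0.
set t := - C / A.
have H : 0 <= \sum_(i | P i) (x i * t + y i) ^+ 2 by apply: sumr_ge0 => i _; exact: sqr_ge0.
have E : \sum_(i | P i) (x i * t + y i) ^+ 2 = t ^+ 2 * A + 2 * t * C + B.
  rewrite /A /B /C mulr_sumr mulr_sumr -!big_split /=; apply: eq_bigr => i _; ring.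
rewrite E /t in H.
have : 0 <= B - C ^+ 2 / A.
  move: H; congr (0 <= _); field; exact: Ap.
rewrite subr_ge0 ler_pdivrMr //; by rewrite mulrC.
Qed.


Context {d : nat}.
Definition dot (u v : 'rV[R]_d) : R := \sum_(k < d) u 0 k * v 0 k.

Lemma dotC (u v : 'rV[R]_d) : dot u v = dot v u.
Proof. by apply: eq_bigr => k _; rewrite mulrC. Qed.
Lemma dotDl (u w v : 'rV[R]_d) : dot (u + w) v = dot u v + dot w v.
Proof. by rewrite /dot -big_split; apply: eq_bigr => k _; rewrite !mxE mulrDl. Qed.
Lemma dotBl (u w v : 'rV[R]_d) : dot (u - w) v = dot u v - dot w v.
Proof. by rewrite /dot -sumrB; apply: eq_bigr => k _; rewrite !mxE mulrBl. Qed.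
Lemma dotZl a (u v : 'rV[R]_d) : dot (a *: u) v = a * dot u v.
Proof. by rewrite /dot mulr_sumr; apply: eq_bigr => k _; rewrite !mxE mulrA. Qed.
Lemma dotDr (u w v : 'rV[R]_d) : dot v (u + w) = dot v u + dot v w.
Proof. by rewrite dotC dotDl !(dotC v). Qed.
Lemma dotBr (u w v : 'rV[R]_d) : dot v (u - w) = dot v u - dot v w.
Proof. by rewrite dotC dotBl !(dotC v). Qed.
Lemma dotZr a (u v : 'rV[R]_d) : dot v (a *: u) = a * dot v u.
Proof. by rewrite dotC dotZl dotC. Qed.
Lemma dot0r (v : 'rV[R]_d) : dot v 0 = 0.
Proof. by rewrite /dot big1 // => k _; rewrite mxE mulr0. Qed.
Lemma dot0l (v : 'rV[R]_d) : dot 0 v = 0.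
Proof. by rewrite dotC dot0r. Qed.
Lemma dot_sumr (I : finType) (P : pred I) (F : I -> 'rV[R]_d) v :
  dot v (\sum_(i | P i) F i) = \sum_(i | P i) dot v (F i).
Proof.
elim/big_rec2: _ => [|i y1 y2 Pi <-]; first exact: dot0r.
by rewrite dotDr.
Qed.
Lemma dot_ge0 (u : 'rV[R]_d) : 0 <= dot u u.
Proof. by apply: sumr_ge0 => k _; rewrite -expr2 sqr_ge0. Qed.
Lemma enormE (u : 'rV[R]_d) : enorm u = Num.sqrt (dot u u).
Proof. by rewrite /enorm /dot; congr Num.sqrt; apply: eq_bigr => k _; rewrite expr2. Qed.
Lemma enorm_ge0 (u : 'rV[R]_d) : 0 <= enorm u.
Proof. exact: sqrtr_ge0. Qed.
Lemma enorm_sq (u : 'rV[R]_d) : enorm u ^+ 2 = dot u u.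
Proof. by rewrite enormE sqr_sqrtr // dot_ge0. Qed.
Lemma dot_CS (u v : 'rV[R]_d) : dot u v <= enorm u * enorm v.
Proof.
rewrite /dot /enorm; exact: (@CS_sum _ xpredT (fun k => u 0 k) (fun k => v 0 k)).
Qed.
Lemma dotNl (u v : 'rV[R]_d) : dot (- u) v = - dot u v.
Proof. by rewrite /dot -sumrN; apply: eq_bigr => k _; rewrite !mxE mulNr. Qed.
Lemma enormN (u : 'rV[R]_d) : enorm (- u) = enorm u.
Proof. by rewrite !enormE dotNl dotC dotNl opprK. Qed.
Lemma dot_CS_abs (u v : 'rV[R]_d) : `|dot u v| <= enorm u * enorm v.
Proof.
rewrite ler_norml dot_CS andbT lerNl -dotNl -(enormN u); exact: dot_CS.
Qed.
Lemma enormB (u v : 'rV[R]_d) : enorm (u - v) = enorm (v - u).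
Proof. by rewrite !enormE !(dotBl, dotBr); congr Num.sqrt; rewrite (dotC u v); ring. Qed.
Lemma enorm_triangle (u v : 'rV[R]_d) : enorm (u + v) <= enorm u + enorm v.
Proof.
rewrite -(@ler_pXn2r _ 2) ?nnegrE ?addr_ge0 ?enorm_ge0 //.
rewrite enorm_sq dotDl !dotDr sqrrD !enorm_sq (dotC v u).
have := dot_CS u v; lra.
Qed.
Lemma enorm_eq0 (u : 'rV[R]_d) : (enorm u == 0) = (u == 0).
Proof.
apply/idP/idP => [|/eqP->]; last by rewrite enormE dot0r sqrtr0.
rewrite enormE sqrtr_eq0 => h.
have h0 : dot u u = 0 by apply/eqP; rewrite eq_le h dot_ge0.
apply/eqP/rowP => k; rewrite mxE; apply/eqP; rewrite -sqrf_eq0; apply/eqP.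
move: (psumr_eq0P (P := xpredT) (F := fun k => u 0 k * u 0 k)) => H.
rewrite expr2; apply: H => //; first by move=> i _; rewrite -expr2 sqr_ge0.
Qed.


Lemma CS2 (I : finType) (P : pred I) (x y : I -> I -> R) :
  \sum_(i | P i) \sum_(j | P j) x i j * y i j <=
  Num.sqrt (\sum_(i | P i) \sum_(j | P j) x i j ^+ 2) *
  Num.sqrt (\sum_(i | P i) \sum_(j | P j) y i j ^+ 2).
Proof.
apply: (@le_trans _ _ (\sum_(i | P i) Num.sqrt (\sum_(j | P j) x i j ^+ 2) *
   Num.sqrt (\sum_(j | P j) y i j ^+ 2))).
  by apply: ler_sum => i _; apply: CS_sum.
have := @CS_sum I P (fun i => Num.sqrt (\sum_(j | P j) x i j ^+ 2))
   (fun i => Num.sqrt (\sum_(j | P j) y i j ^+ 2)).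
congr (_ <= Num.sqrt _ * Num.sqrt _);
  apply: eq_bigr => i _; rewrite sqr_sqrtr //; apply: sumr_ge0 => j _; exact: sqr_ge0.
Qed.

Lemma GvelE (g : R -> R) (p : 'rV[R]_d) : Gvel g p = (g (enorm p) / enorm p) *: p.
Proof. by rewrite /Gvel; case: eqP => [->|//]; rewrite scaler0. Qed.

Lemma dot_Gvel (g : R -> R) x (p : 'rV[R]_d) :
  dot x (Gvel g p) = (g (enorm p) / enorm p) * dot x p.
Proof. by rewrite GvelE dotZr. Qed.

Lemma enorm_Gvel (g : R -> R) (p : 'rV[R]_d) : g 0 = 0 -> 0 <= g (enorm p) ->
  enorm (Gvel g p) = g (enorm p).
Proof.
move=> g0 gp; have [->|pn0] := eqVneq p 0.
  by rewrite /Gvel eqxx !enormE dot0r sqrtr0 g0.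
have a0 : enorm p != 0 by rewrite enorm_eq0.
rewrite enormE GvelE dotZl dotZr -enorm_sq.
have -> : g (enorm p) / enorm p * (g (enorm p) / enorm p * enorm p ^+ 2) = g (enorm p) ^+ 2.
  by field.
by rewrite sqrtr_sqr ger0_norm.
Qed.

Lemma dot_Gvel_self (g : R -> R) (p : 'rV[R]_d) :
  dot p (Gvel g p) = g (enorm p) * enorm p.
Proof.
rewrite dot_Gvel -enorm_sq; have [a0|a0] := eqVneq (enorm p) 0.
  by rewrite a0 !mulr0 expr0n /= mulr0.
by rewrite expr2 mulrA divfK.
Qed.

Lemma dot_Gvel_le (g : R -> R) x (p : 'rV[R]_d) : g 0 = 0 -> 0 <= g (enorm p) ->
  dot x (Gvel g p) <= enorm x * g (enorm p).
Proof. by move=> g0 gp; rewrite -enorm_Gvel //; apply: dot_CS. Qed.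

Lemma mono_real (a b x al be m : R) : 0 < a -> 0 < b -> -(a*b) <= x <= a*b ->
  m * (a - b) ^+ 2 <= (a - b) * (al * a - be * b) ->
  m * (a + b) <= al * a + be * b ->
  m * (a ^+ 2 + b ^+ 2 - 2 * x) <= al * a ^+ 2 + be * b ^+ 2 - (al + be) * x.
Proof.
move=> a0 b0 /andP[x1 x2] h1 h2.
have ab0 : 0 < a * b by apply: mulr_gt0.
have F1 : 0 <= (x + a * b) * ((a - b) * (al * a - be * b) - m * (a - b) ^+ 2).
  by apply: mulr_ge0; lra.
have F2 : 0 <= (a * b - x) * ((a + b) * (al * a + be * b - m * (a + b))).
  apply: mulr_ge0; first lra.
  apply: mulr_ge0; lra.
have E : 2 * (a * b) * (al * a ^+ 2 + be * b ^+ 2 - (al + be) * x - m * (a ^+ 2 + b ^+ 2 - 2 * x))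
  = (x + a * b) * ((a - b) * (al * a - be * b) - m * (a - b) ^+ 2) +
    (a * b - x) * ((a + b) * (al * a + be * b - m * (a + b))) by ring.
have : 0 <= 2 * (a * b) * (al * a ^+ 2 + be * b ^+ 2 - (al + be) * x - m * (a ^+ 2 + b ^+ 2 - 2 * x)).
  rewrite E; lra.
rewrite pmulr_rge0 ?mulr_gt0 //; lra.
Qed.


Lemma mono_vec (g : R -> R) (m : R) (p p' : 'rV[R]_d) :
  m * enorm p <= g (enorm p) -> m * enorm p' <= g (enorm p') ->
  m * (enorm p - enorm p') ^+ 2 <= (enorm p - enorm p') * (g (enorm p) - g (enorm p')) ->
  m * dot (p - p') (p - p') <= dot (p - p') (Gvel g p - Gvel g p').
Proof.
move=> ha hb hab.
have [p0|pn0] := eqVneq p 0.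
  rewrite p0 /Gvel eqxx !sub0r -/(Gvel g p') dotNl dotC dotNl opprK dotNl dotC dotNl opprK dotC.
  by rewrite dot_Gvel_self -enorm_sq expr2 mulrA ler_wpM2r // enorm_ge0.
have [p0|pn0'] := eqVneq p' 0.
  rewrite p0 {2}/Gvel eqxx !subr0.
  by rewrite dot_Gvel_self -enorm_sq expr2 mulrA ler_wpM2r // enorm_ge0.
have a0 : 0 < enorm p by rewrite lt_def enorm_eq0 pn0 enorm_ge0.
have b0 : 0 < enorm p' by rewrite lt_def enorm_eq0 pn0' enorm_ge0.
rewrite !(dotBl, dotBr) !dot_Gvel (dotC p' p) -!enorm_sq.
set a := enorm p; set b := enorm p'; set x := dot p p'.
have hx : -(a*b) <= x <= a*b by rewrite -ler_norml; apply: dot_CS_abs.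
have Ea : g a / a * a = g a by rewrite divfK // gt_eqF.
have Eb : g b / b * b = g b by rewrite divfK // gt_eqF.
have := @mono_real a b x (g a / a) (g b / b) m a0 b0 hx.
rewrite Ea Eb => /(_ hab); rewrite -/a -/b => H.
have : m * (a + b) <= g a + g b by rewrite /a /b; lra.
move/H => {}H.
move: H; congr (_ <= _); ring.
Qed.

Section G.
Variables (g dg : R -> R).
Hypothesis gder : forall r : R, 0 < r -> is_derive r 1 g (dg r).
Hypothesis gder0 : (fun h : R => (g h - g 0) / h) @ 0^'+ --> dg 0.

Lemma g_pos_bounds (a b lo hi : R) : 0 < b -> b <= a ->
  (forall c, b <= c <= a -> lo <= dg c <= hi) ->
  lo * (a - b) <= g a - g b <= hi * (a - b).
Proof.
move=> b0 ba hc; have [e|ba'] := eqVneq b a.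
  by rewrite e !subrr !mulr0 lexx.
have lt : b < a by rewrite lt_def eq_sym ba' ba.
have [c cin ->] : exists2 c, c \in `]b, a[ & g a - g b = dg c * (a - b).
  apply: MVT => //.
    move=> x; rewrite in_itv /= => /andP[bx _]; apply: gder; exact: lt_trans bx.
  apply: derivable_within_continuous => x; rewrite in_itv /= => /andP[bx _].
  by apply: ex_derive; apply: gder; exact: lt_le_trans bx.
move: cin; rewrite in_itv /= => /andP[c1 c2].
have /andP[h1 h2] := hc c (ltac:(by rewrite (ltW c1) (ltW c2))).
have ab0 : 0 <= a - b by lra.
by rewrite !ler_wpM2r.
Qed.

Lemma g_cont0 : (fun h => g h) @ 0^'+ --> g 0.
Proof.
have H : (fun h : R => h * ((g h - g 0) / h) + g 0) @ 0^'+ --> 0 * dg 0 + g 0.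
  apply: cvgD; last exact: cvg_cst.
  apply: cvgM => //; exact: cvg_at_right_filter (cvg_id).
rewrite mul0r add0r in H.
apply: cvg_trans H; apply: near_eq_cvg; near=> h.
have h0 : 0 < h by near: h; exact: nbhs_right_gt.
by rewrite mulrC divfK ?gt_eqF // subrK.
Unshelve. all: by end_near. Qed.

Lemma g_bounds (a b lo hi : R) : 0 <= b -> b <= a ->
  (forall c, b <= c <= a -> lo <= dg c <= hi) ->
  lo * (a - b) <= g a - g b <= hi * (a - b).
Proof.
move=> b0 ba hc; have [bp|] := ltrP 0 b; first exact: g_pos_bounds.
move=> b0'; have bz : b = 0 by apply/eqP; rewrite eq_le b0 b0'.
subst b; have [az|ap] := eqVneq a 0.
  by rewrite az !subrr !mulr0 lexx.
have a0 : 0 < a by rewrite lt_def ap ba.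
have key : forall h, 0 < h -> h < a -> lo * (a - h) <= g a - g h <= hi * (a - h).
  move=> h h0 ha; apply: g_pos_bounds => // [|c /andP[c1 c2]]; first exact: ltW.
  by apply: hc; rewrite c2 andbT; apply: le_trans c1; exact: ltW.
have C1 : (fun h => g a - g h - lo * (a - h)) @ 0^'+ --> g a - g 0 - lo * (a - 0).
  apply: cvgB; first exact: cvgB (cvg_cst _) g_cont0.
  apply: cvgM; first exact: cvg_cst.
  apply: cvgB; first exact: cvg_cst.
  exact: cvg_at_right_filter (cvg_id).
have C2 : (fun h => hi * (a - h) - (g a - g h)) @ 0^'+ --> hi * (a - 0) - (g a - g 0).
  apply: cvgB; last exact: cvgB (cvg_cst _) g_cont0.
  apply: cvgM; first exact: cvg_cst.
  apply: cvgB; first exact: cvg_cst.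
  exact: cvg_at_right_filter (cvg_id).
have L1 : 0 <= g a - g 0 - lo * (a - 0).
  apply: (cvgr_to_ge C1); near=> h.
  have h0 : 0 < h by near: h; exact: nbhs_right_gt.
  have ha : h < a by near: h; exact: nbhs_right_lt.
  have /andP[k1 _] := key h h0 ha; lra.
have L2 : 0 <= hi * (a - 0) - (g a - g 0).
  apply: (cvgr_to_ge C2); near=> h.
  have h0 : 0 < h by near: h; exact: nbhs_right_gt.
  have ha : h < a by near: h; exact: nbhs_right_lt.
  have /andP[_ k2] := key h h0 ha; lra.
apply/andP; split; lra.
Unshelve. all: by end_near. Qed.

End G.

Lemma is_derive_coord (x : R -> 'rV[R]_d) (t : R) v k :
  is_derive t 1 x v -> is_derive t 1 (fun s => x s 0 k) (v 0 k).
Proof.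
move=> hx.
have dx : derivable x t 1 by exact: ex_derive.
have dk : derivable (fun s => x s 0 k) t 1 by move/derivable_mxP: dx; apply.
have := derive_mx dx; rewrite derive_val => ->; rewrite mxE.
exact: derivableP.
Qed.

Lemma is_derive_bigsum (I : finType) (P : pred I) (h : I -> R -> R) (dh : I -> R) (t : R) :
  (forall i, is_derive t 1 (h i) (dh i)) ->
  is_derive t 1 (fun s => \sum_(i | P i) h i s) (\sum_(i | P i) dh i).
Proof.
move=> H.
have -> : (fun s => \sum_(i | P i) h i s) = \sum_(i | P i) h i by rewrite fct_sumE.
elim/big_rec2: _ => [|i y1 y2 Pi IH]; first exact: is_derive_cst.
exact: is_deriveD.
Qed.


Lemma is_derive_dot (x y : R -> 'rV[R]_d) (t : R) vx vy :
  is_derive t 1 x vx -> is_derive t 1 y vy ->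
  is_derive t 1 (fun s => dot (x s) (y s)) (dot (x t) vy + dot vx (y t)).
Proof.
move=> hx hy; rewrite /dot -big_split /=.
apply: is_derive_bigsum => k.
have hk := is_derive_coord _ _ _ k hx; have hk' := is_derive_coord _ _ _ k hy.
have H := is_deriveM hk hk'.
change (is_derive t 1 ((fun s => x s 0 k) * (fun s => y s 0 k)) (x t 0 k * vy 0 k + vx 0 k * y t 0 k)).
apply: is_derive_eq H _.
by rewrite /GRing.scale /= [vx 0 k * _]mulrC.
Qed.

Lemma is_derive_vB (x y : R -> 'rV[R]_d) (t : R) vx vy :
  is_derive t 1 x vx -> is_derive t 1 y vy ->
  is_derive t 1 (fun s => x s - y s) (vx - vy).
Proof. move=> hx hy; exact: is_deriveB. Qed.

End CS.

Lemma deriv_neg_left (R : realType) (h : R -> R) (x dh : R) : is_derive x 1 h dh -> dh < 0 ->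
  exists2 del : R, 0 < del & forall u, 0 < u < del -> h x < h (x - u).
Proof.
move=> hd dn.
have C : (fun u : R => u^-1 *: ((h \o shift x) (u *: 1) - h x)) @ 0^' --> dh.
  rewrite -(@derive_val _ _ _ _ _ _ _ hd); exact: ex_derive.
move/cvgrPdist_lt : C => /(_ (- dh)); rewrite oppr_gt0 => /(_ dn) H.
move: H => /= /nbhs_ballP [del del0 Hd].
exists del => // u /andP[u0 ud].
have := Hd (- u); rewrite /ball /= sub0r opprK gtr0_norm // => /(_ ud).
rewrite oppr_eq0 gt_eqF // => /(_ isT).
rewrite /GRing.scale /= mulr1 (addrC (- u)) ltr_norml => /andP[H _].
have : (- u)^-1 * (h (x - u) - h x) < 0 by lra.
rewrite invrN mulNr oppr_lt0 pmulr_rgt0 ?invr_gt0 // subr_gt0 //.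
Qed.

Lemma within_near (R : realType) (P : R -> Prop) (tau : R) :
  (\forall s \near within [set s : R | 0 <= s] (nbhs tau), P s) ->
  exists2 del : R, 0 < del & forall s, 0 <= s -> `|tau - s| < del -> P s.
Proof.
move=> /= /nbhs_ballP [del del0 Hd]; exists del => // s s0 hs.
by apply: Hd => //; rewrite /ball /=.
Qed.

Lemma barrier (R : realType) (N : nat) (phi : 'I_N -> R -> R) (dphi : 'I_N -> R -> R) (B eps : R) :
  0 < eps ->
  (forall i, phi i 0 <= B) ->
  (forall i (tau : R), 0 <= tau -> phi i @ within [set s : R | 0 <= s] (nbhs tau) --> phi i tau) ->
  (forall i (tau : R), 0 < tau -> is_derive tau 1 (phi i) (dphi i tau)) ->
  (forall i (tau : R), 0 < tau -> (forall k, phi k tau <= phi i tau) -> dphi i tau <= 0) ->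
  forall T, 0 <= T -> forall i, phi i T <= B + eps * (1 + T).
Proof.
move=> e0 h0 hc hd hs T T0 i0; rewrite leNgt; apply/negP => HT.
pose b (s : R) := B + eps * (1 + s).
pose V := [set s : R | 0 <= s /\ exists i, b s < phi i s].
have VT : V T by split => //; exists i0.
have Vlb : has_lbound V by exists 0 => s [].
have Vne : V !=set0 by exists T.
pose tau := inf V.
have tau0 : 0 <= tau by apply: lb_le_inf => // s [].
have Ha : forall s, 0 <= s -> s < tau -> forall i, phi i s <= b s.
  move=> s s0 st i; rewrite leNgt; apply/negP => hi.
  have : tau <= s by apply: ge_inf => //; split => //; exists i.
  by rewrite leNgt st.
have cb : forall i, (fun s => phi i s - b s) @ within [set s : R | 0 <= s] (nbhs tau) --> phi i tau - b tau.
  move=> i; apply: cvgB; first exact: hc.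
  apply: cvgD; first exact: cvg_cst.
  apply: cvgM; first exact: cvg_cst.
  apply: cvgD; first exact: cvg_cst.
  exact: cvg_within.
have FF : Filter (within [set s : R | 0 <= s] (nbhs tau)) by apply: within_filter.
have Hb : forall k, phi k tau <= b tau.
  move=> k; have [tz|tp] := eqVneq tau 0.
    rewrite tz /b; have := h0 k; nra.
  have tp' : 0 < tau by rewrite lt_def tp tau0.
  rewrite leNgt; apply/negP => hk.
  have := @cvgr_gt _ _ _ FF _ _ (cb k) 0; rewrite subr_gt0 => /(_ hk) /within_near [del del0 Hd].
  pose s := tau - Num.min del tau / 2.
  have m1 : 0 < Num.min del tau by rewrite lt_min del0 tp'.
  have m2 : Num.min del tau <= del by rewrite ge_min lexx.
  have m3 : Num.min del tau <= tau by rewrite ge_min lexx orbT.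
  have s0 : 0 <= s by rewrite /s; lra.
  have := Hd s s0; rewrite /s opprB addrC subrK gtr0_norm; last by lra.
  have : Num.min del tau / 2 < del by lra.
  move=> hh /(_ hh); rewrite subr_gt0 ltNge Ha //; lra.
have Hc : exists i, phi i tau = b tau.
  apply: contrapT => nH.
  have lt : forall i, phi i tau - b tau < 0.
    move=> i; rewrite subr_lt0 lt_def Hb andbT; apply/eqP => e; apply: nH; by exists i.
  have : \forall s \near within [set s : R | 0 <= s] (nbhs tau), forall i, phi i s - b s < 0.
    apply: (filter_forall FF) => i; exact: (@cvgr_lt _ _ _ FF _ _ (cb i) 0 (lt i)).
  move=> /within_near [del del0 Hd].
  have [e [ez [i Ve]] ee] := inf_adherent del0 (conj Vne Vlb).
  have te : tau <= e by apply: ge_inf => //; split => //; exists i.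
  have := Hd e ez; rewrite distrC ger0_norm ?subr_ge0 // => /(_ ltac:(rewrite -/tau; lra)) /(_ i).
  lra.
have [i Hi] := Hc.
have tp : 0 < tau.
  rewrite lt_def tau0 andbT; apply/eqP => tz; move: Hi; rewrite tz /b.
  have := h0 i; nra.
have dneg : dphi i tau - eps < 0.
  have := hs i tau tp (fun k => ltac:(rewrite Hi; exact: Hb k)); lra.
have hder : is_derive tau 1 (fun s => phi i s - b s) (dphi i tau - eps).
  have H1 := hd i tau tp.
  have H2 : is_derive tau 1 (fun s : R => b s) eps.
    have -> : (fun s => b s) = cst (B + eps) + eps \*: id.
      by apply/funext => s; rewrite /b /= mulrDr mulr1 addrA.
    have := is_deriveD (is_derive_cst (B + eps) tau 1) (is_deriveZ eps (is_derive_id tau 1)).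
    by rewrite add0r /GRing.scale /= mulr1.
  have -> : (fun s => phi i s - b s) = phi i - (fun s => b s) by apply/funext.
  exact: is_deriveB.
have [del del0 Hd] := @deriv_neg_left _ _ _ _ hder dneg.
pose u := Num.min del tau / 2.
have m1 : 0 < Num.min del tau by rewrite lt_min del0 tp.
have m2 : Num.min del tau <= del by rewrite ge_min lexx.
have m3 : Num.min del tau <= tau by rewrite ge_min lexx orbT.
have := Hd u ltac:(rewrite /u; apply/andP; split; lra).
rewrite Hi subrr subr_gt0 ltNge Ha //; rewrite /u; lra.
Qed.

Section Core.
Variables (R : realType) (d N : nat) (L : pred 'I_N).
Implicit Types (P V G : 'I_N -> 'rV[R]_d).

Lemma X_eq2W P V :
  \sum_(i | L i) \sum_(j | L j) dot (P i - P j) (V i - V j) =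
  2 * \sum_(i | L i) \sum_(j | L j) dot (P i - P j) (V i).
Proof.
have E : \sum_(i | L i) \sum_(j | L j) dot (P i - P j) (V j) =
         - \sum_(i | L i) \sum_(j | L j) dot (P i - P j) (V i).
  rewrite exchange_big /= -sumrN; apply: eq_bigr => i _; rewrite -sumrN.
  by apply: eq_bigr => j _; rewrite -dotNl opprB.
transitivity (\sum_(i | L i) \sum_(j | L j) dot (P i - P j) (V i) -
  \sum_(i | L i) \sum_(j | L j) dot (P i - P j) (V j)).
  rewrite -sumrB; apply: eq_bigr => i _; rewrite -sumrB; apply: eq_bigr => j _.
  exact: dotBr.
by rewrite E opprK; ring.
Qed.


Lemma swap2 (F : 'I_N -> 'I_N -> R) :
  \sum_(i | L i) \sum_(k | L k) F i k = \sum_(i | L i) \sum_(k | L k) F k i.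
Proof. exact: exchange_big. Qed.

Lemma W1_eq P G (a : 'I_N -> 'I_N -> R) : (forall i k, a i k = a k i) ->
  2 * (\sum_(i | L i) \sum_(j | L j) \sum_(k | L k) a i k * dot (P i - P j) (G k - G i)) =
  - (\sum_(j | L j) 1) * \sum_(i | L i) \sum_(k | L k) a i k * dot (P i - P k) (G i - G k).
Proof.
move=> asym.
set A := fun i k => a i k * dot (P i) (G k - G i).
have E1 : \sum_(i | L i) \sum_(j | L j) \sum_(k | L k) a i k * dot (P i - P j) (G k - G i) =
   (\sum_(j | L j) 1) * (\sum_(i | L i) \sum_(k | L k) A i k) -
   \sum_(j | L j) \sum_(i | L i) \sum_(k | L k) a i k * dot (P j) (G k - G i).
  rewrite [X in _ - X]exchange_big /= mulr_sumr -sumrB; apply: eq_bigr => i _.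
  rewrite mulr_suml -sumrB; apply: eq_bigr => j _; rewrite mul1r -sumrB.
  by apply: eq_bigr => k _; rewrite /A dotBl mulrBr.
have E2 : forall j, \sum_(i | L i) \sum_(k | L k) a i k * dot (P j) (G k - G i) = 0.
  move=> j; apply/eqP; rewrite -subr_eq0 subr0.
  have -> : \sum_(i | L i) \sum_(k | L k) a i k * dot (P j) (G k - G i) =
    \sum_(i | L i) \sum_(k | L k) a i k * dot (P j) (G k) -
    \sum_(i | L i) \sum_(k | L k) a i k * dot (P j) (G i).
    rewrite -sumrB; apply: eq_bigr => i _; rewrite -sumrB; apply: eq_bigr => k _.
    by rewrite dotBr mulrBr.
  rewrite swap2 subr_eq0; apply/eqP; apply: eq_bigr => i _; apply: eq_bigr => k _.
  by rewrite asym.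
have E3 : 2 * (\sum_(i | L i) \sum_(k | L k) A i k) =
   - \sum_(i | L i) \sum_(k | L k) a i k * dot (P i - P k) (G i - G k).
  have -> : forall x : R, 2 * x = x + x by move=> x; ring.
  rewrite [X in _ + X]swap2 -big_split /= -sumrN.
  apply: eq_bigr => i _; rewrite -big_split /= -sumrN; apply: eq_bigr => k _.
  rewrite /A (asym k i) !(dotBl, dotBr); ring.
have E4 : \sum_(j | L j) \sum_(i | L i) \sum_(k | L k) a i k * dot (P j) (G k - G i) = 0.
  by rewrite big1 // => j _; exact: E2.
rewrite E1 E4 subr0.
rewrite mulrCA E3; ring.
Qed.


Lemma Tk_bound P G (a : 'I_N -> 'I_N -> R) k Gb :
  (forall i j, L i -> L j -> 0 <= a j k * dot (P i - P j) (G i - G j)) ->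
  (forall i, L i -> enorm (G i) <= Gb) -> enorm (G k) <= Gb ->
  2 * (\sum_(i | L i) \sum_(j | L j) a i k * dot (P i - P j) (G k - G i)) <=
  (Gb + Gb) * \sum_(i | L i) \sum_(j | L j) `|a i k - a j k| * enorm (P i - P j).
Proof.
move=> hD hG hGk.
have -> : forall x : R, 2 * x = x + x by move=> x; ring.
rewrite [X in _ + X]swap2 -big_split /= mulr_sumr; apply: ler_sum => i Li.
rewrite -big_split /= mulr_sumr; apply: ler_sum => j Lj.
have E : a i k * dot (P i - P j) (G k - G i) + a j k * dot (P j - P i) (G k - G j) =
  (a i k - a j k) * dot (P i - P j) (G k - G i) - a j k * dot (P i - P j) (G i - G j).
  rewrite !(dotBl, dotBr); ring.
rewrite E.
have h1 := hD i j Li Lj.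
have h2 : (a i k - a j k) * dot (P i - P j) (G k - G i) <=
   `|a i k - a j k| * (enorm (P i - P j) * (Gb + Gb)).
  apply: le_trans (ler_norm _) _; rewrite normrM; apply: ler_wpM2l => //.
  apply: le_trans (dot_CS_abs _ _) _; apply: ler_wpM2l; first exact: enorm_ge0.
  apply: le_trans (enorm_triangle _ _) _; rewrite enormN.
  by apply: lerD => //; apply: hG.
have e0 : 0 <= enorm (P i - P j) by exact: enorm_ge0.
have -> : (Gb + Gb) * (`|a i k - a j k| * enorm (P i - P j)) =
   `|a i k - a j k| * (enorm (P i - P j) * (Gb + Gb)) by ring.
lra.
Qed.


Lemma term_le_sum (F : 'I_N -> R) i : (forall j, L j -> 0 <= F j) -> L i ->
  F i <= \sum_(j | L j) F j.
Proof.
move=> h Li; rewrite (bigD1 i) //= lerDl; apply: sumr_ge0 => j /andP[Lj _]; exact: h.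
Qed.

Lemma exch3 (F : 'I_N -> 'I_N -> 'I_N -> R) (K : pred 'I_N) :
  \sum_(i | L i) \sum_(j | L j) \sum_(k | K k) F i j k =
  \sum_(k | K k) \sum_(i | L i) \sum_(j | L j) F i j k.
Proof.
transitivity (\sum_(i | L i) \sum_(k | K k) \sum_(j | L j) F i j k).
  by apply: eq_bigr => i _; exact: exchange_big.
exact: exchange_big.
Qed.

End Core.

Lemma count_lt (R : realType) (N l : nat) : (l <= N)%N ->
  \sum_(j < N | (j < l)%N) (1 : R) = l%:R.
Proof.
move=> lN; rewrite -(big_ord_widen_cond _ xpredT (fun _ => (1:R)) lN) /=.
by rewrite sumr_const card_ord.
Qed.

Lemma count_ge (R : realType) (N l : nat) : (l <= N)%N ->
  \sum_(j < N | ~~ (j < l)%N) (1 : R) = (N - l)%:R.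
Proof.
move=> lN.
have E : \sum_(j < N) (1:R) = \sum_(j < N | (j < l)%N) 1 + \sum_(j < N | ~~ (j < l)%N) 1.
  by rewrite (bigID (fun j : 'I_N => (j < l)%N)).
move: E; rewrite sumr_const card_ord count_lt // => E.
by rewrite natrB // E addrC addKr.
Qed.

Lemma cvg_bigsum {R : realType} {T : Type} (F : set_system T) {FF : Filter F}
  (I : finType) (P : pred I) (h : I -> T -> R) (lv : I -> R) :
  (forall i, h i @ F --> lv i) ->
  (fun s => \sum_(i | P i) h i s) @ F --> \sum_(i | P i) lv i.
Proof.
move=> H; rewrite -fct_sumE.
elim/big_rec2: _ => [|i y1 y2 Pi IH]; first exact: cvg_cst.
exact: cvgD.
Qed.

Lemma cvg_dot {R : realType} {d : nat} {T : Type} (F : set_system T) {FF : Filter F}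
  (x y : T -> 'rV[R]_d) x0 y0 :
  x @ F --> x0 -> y @ F --> y0 -> (fun s => dot (x s) (y s)) @ F --> dot x0 y0.
Proof.
move=> hx hy; rewrite /dot; apply: cvg_bigsum => k.
have cx := @continuous_cvg _ _ _ F FF x (fun M : 'rV[R]_d => M 0 k) x0 (@coord_continuous R _ _ 0 k x0) hx.
have cy := @continuous_cvg _ _ _ F FF y (fun M : 'rV[R]_d => M 0 k) y0 (@coord_continuous R _ _ 0 k y0) hy.
exact: cvgM cx cy.
Qed.

Lemma enorm_rev {R : realType} {d : nat} (u v : 'rV[R]_d) :
  `|enorm u - enorm v| <= enorm (u - v).
Proof.
rewrite ler_norml; apply/andP; split.
  have := enorm_triangle (v - u) u; rewrite subrK enormB; lra.
have := enorm_triangle (u - v) v; rewrite subrK; lra.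
Qed.

Theorem lemma2p1 (R : realType) (N d : nat) (kappa : R)
  (g dg : R -> R) (psi : R -> R)
  (q p : 'I_N -> R -> 'rV[R]_d) (l : nat) :
  (0 < N)%N -> (0 < d)%N -> 0 < kappa ->
  (* g in C^1([0,oo)) with derivative dg (right derivative at 0) *)
  (forall r : R, 0 < r -> is_derive r 1 g (dg r)) ->
  ((fun h : R => (g h - g 0) / h) @ 0^'+ --> dg 0) ->
  {within `[0, +oo[, continuous dg} ->
  g 0 = 0 ->
  (forall b, 0 <= b -> exists m M : R, 0 < m /\
      forall r, 0 <= r <= b -> m <= dg r <= M) ->
  (convex_on_pos g \/ concave_on_pos g) ->
  (* kernel psi : positive, bounded, Lipschitz, nonincreasing *)
  (forall r, 0 <= r -> 0 < psi r) ->
  (exists B : R, forall r, 0 <= r -> psi r <= B) ->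
  (exists L : R, forall r s, 0 <= r -> 0 <= s -> `|psi r - psi s| <= L * `|r - s|) ->
  (forall r s, 0 <= r -> r <= s -> psi s <= psi r) ->
  (* (q,p) is a solution on [0,oo): continuous on [0,oo), satisfying the ODE for t > 0 *)
  (forall i, {within `[0, +oo[, continuous (q i)}) ->
  (forall i, {within `[0, +oo[, continuous (p i)}) ->
  (forall i (t : R), 0 < t -> is_derive t 1 (q i) (Gvel g (p i t))) ->
  (forall i (t : R), 0 < t -> is_derive t 1 (p i)
      ((kappa / N%:R) *: \sum_(k < N)
          (psi (enorm (q k t - q i t)) *: (Gvel g (p k t) - Gvel g (p i t))))) ->
  (1 <= l <= N)%N ->
  let P0M := PM (fun i => p i 0) in
  let MG := sup [set dg r | r in `[0, P0M]] in
  let mG := inf [set dg r | r in `[0, P0M]] in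
  let calM := Num.min mG (mG ^+ 2 / MG) in
  forall t : R, 0 < t ->
  derivable (fun s => normS l (fun i => p i s)) t 1 ->
  let nP := normS l (fun i => p i t) in
  let nQ := normS l (fun i => q i t) in
  derive1 (fun s : R => normS l (fun i => p i s)) t <=
     - (kappa * calM * l%:R / N%:R) * psi nQ * nP
     + 2 * kappa * MG * (N - l)%:R * P0M * Lpsi psi (qmin l (fun i => q i t)) / N%:R * nQ
  /\
  derive1 (fun s : R => normS l (fun i => p i s)) t <=
     - (kappa * calM * l%:R / N%:R) * psi nQ * nP
     + 4 * kappa * P0M * MG * l%:R * (N - l)%:R / N%:R * psimax psi l (fun i => q i t).
Proof.
move=> N0 d0 k0 gder gder0 dgcont g0 gbnd gconv psipos psibnd psilip psimono
  qc pc qder pder hl P0M MG mG calM t t0 fder nP nQ.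
have hlN : (l <= N)%N by case/andP: hl.
have hl1 : (1 <= l)%N by case/andP: hl.
have N0' : (0 : R) < N%:R by rewrite ltr0n.
set c := kappa / N%:R.
have c0 : 0 < c by rewrite /c divr_gt0.
have P0M0 : 0 <= P0M.
  rewrite /P0M /PM; elim/big_ind: _ => [//| x y hx hy | i _]; last exact: enorm_ge0.
  by rewrite le_max hx.
have hP0 : forall i, enorm (p i 0) <= P0M.
  by move=> i; rewrite /P0M /PM; apply: le_bigmax.
have gmon : forall x y, 0 <= y -> y <= x -> g y <= g x /\ 0 <= g x.
  move=> x y y0 yx; have x0 : 0 <= x by exact: le_trans yx.
  have [m [M [m0 hm]]] := gbnd x x0.
  have := g_bounds g dg gder gder0 x y m M y0 yx (fun r hr => hm r ltac:(case/andP: hr => h1 h2; rewrite h2 (le_trans y0 h1))).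
  have := g_bounds g dg gder gder0 x 0 m M (lexx 0) x0 (fun r hr => hm r hr) => /andP[h2 _].
  rewrite g0 subr0 in h2; split; nra.
have [m1 [M1 [m10 hm1]]] := gbnd P0M P0M0.
have hm1' : forall r, r \in `[0, P0M] -> m1 <= dg r /\ dg r <= M1.
  by move=> r; rewrite in_itv /= => /hm1 /andP.
have Ene : [set dg r | r in `[0, P0M]] !=set0.
  by exists (dg 0); exists 0 => //; rewrite /= in_itv /= lexx P0M0.
have inI : forall r, 0 <= r <= P0M -> [set dg r | r in `[0, P0M]] (dg r).
  by move=> r hr; exists r => //; rewrite /= in_itv /=.
have hmG : forall r, 0 <= r <= P0M -> mG <= dg r.
  move=> r hr; apply: ge_inf; last exact: inI.
  by exists m1 => z [r' /hm1' [] + _ <-].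
have hMG : forall r, 0 <= r <= P0M -> dg r <= MG.
  move=> r hr; apply: ub_le_sup; last exact: inI.
  by exists M1 => z [r' /hm1' [] _ + <-].
have mG0 : 0 < mG.
  apply: lt_le_trans m10 _; apply: lb_le_inf => // z [r' hr' <-].
  by case: (hm1' r' hr').
have r0 : (0:R) <= 0 <= P0M by rewrite lexx P0M0.
have mGMG : mG <= MG by apply: le_trans (hmG 0 r0) (hMG 0 r0).
have MG0 : 0 < MG by apply: lt_le_trans mG0 mGMG.
have calMmG : calM <= mG by rewrite /calM ge_min lexx.
have gB : forall x y, 0 <= y -> y <= x -> x <= P0M -> mG * (x - y) <= g x - g y <= MG * (x - y).
  move=> x y y0 yx xP; apply: g_bounds => // r /andP[h1 h2].
  have hr : 0 <= r <= P0M by rewrite (le_trans y0 h1) (le_trans h2 xP).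
  by rewrite hmG // hMG.
have pcw : forall i (tau : R), 0 <= tau -> p i @ within [set s : R | 0 <= s] (nbhs tau) --> p i tau.
  move=> i tau tau0; move/subspace_continuousP: (pc i) => H.
  have := H tau; rewrite /= in_itv /= andbT => /(_ tau0) H1.
  apply: cvg_trans H1; apply: cvg_app; apply: within_subset => s /=.
  by rewrite in_itv /= andbT.
pose V i s := (kappa / N%:R) *: \sum_(k < N)
          (psi (enorm (q k s - q i s)) *: (Gvel g (p k s) - Gvel g (p i s))).
have psi0 : forall r, 0 <= r -> 0 <= psi r by move=> r /psipos/ltW.
have dotV : forall i s x, dot x (V i s) = c * \sum_(k < N) psi (enorm (q k s - q i s)) *
     (dot x (Gvel g (p k s)) - dot x (Gvel g (p i s))).
  move=> i s x; rewrite /V dotZr dot_sumr; congr (_ * _); apply: eq_bigr => k _.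
  by rewrite dotZr dotBr.
have maxp : forall i, enorm (p i t) <= P0M.
  pose phi i s := dot (p i s) (p i s).
  pose dphi i s := 2 * dot (p i s) (V i s).
  have key : forall eps, 0 < eps -> forall i, phi i t <= P0M ^+ 2 + eps * (1 + t).
    move=> eps e0; apply: (@barrier R N phi dphi) => //; last exact: ltW.
    - move=> i; rewrite /phi -enorm_sq; have := hP0 i; have := enorm_ge0 (p i 0); nra.
    - by move=> i tau tau0; apply: cvg_dot; apply: pcw.
    - move=> i tau tau0; rewrite /phi /dphi /=; have := is_derive_dot _ _ _ _ _ (pder i tau tau0) (pder i tau tau0).
      by move=> H; apply: is_derive_eq H _; rewrite (dotC (V i tau)); ring.
    - move=> i tau tau0 hk; rewrite /dphi pmulr_rle0 // dotV pmulr_rle0 //.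
      rewrite sumr_le0 // => k _.
      have pk : enorm (p k tau) <= enorm (p i tau).
        by rewrite enormE enormE ler_sqrt //; [exact: hk | exact: dot_ge0].
      have [gle gk0] := gmon _ _ (enorm_ge0 _) pk.
      have [_ gk0'] := gmon _ _ (enorm_ge0 _) (lexx (enorm (p k tau))).
      apply: mulr_ge0_le0; first by apply: psi0; exact: enorm_ge0.
      rewrite subr_le0 dot_Gvel_self.
      apply: le_trans (dot_Gvel_le g (p i tau) (p k tau) g0 gk0') _.
      by rewrite mulrC ler_wpM2r // enorm_ge0.
  move=> i; have := key; move=> {}key.
  have hsq : phi i t <= P0M ^+ 2.
    apply/ler_addgt0Pr => e e0.
    have t1 : 0 < 1 + t by lra.
    have := key (e / (1 + t)) (divr_gt0 e0 t1) i.
    by rewrite divfK // gt_eqF.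
  rewrite -(@ler_pXn2r _ 2) ?nnegrE ?enorm_ge0 // enorm_sq; exact: hsq.
pose Sf s := \sum_(i < N | (i < l)%N) \sum_(j < N | (j < l)%N) dot (p i s - p j s) (p i s - p j s).
pose f := fun s => normS l (fun i => p i s).
have Sf0 : forall s, 0 <= Sf s.
  by move=> s; apply: sumr_ge0 => i _; apply: sumr_ge0 => j _; exact: dot_ge0.
have fE : forall s, f s = Num.sqrt (Sf s).
  move=> s; rewrite /f /normS /Sf; congr Num.sqrt; apply: eq_bigr => i _.
  by apply: eq_bigr => j _; rewrite enorm_sq.
have f0 : forall s, 0 <= f s by move=> s; rewrite fE sqrtr_ge0.
have fSf : f * f = Sf.
  apply/funext => s; rewrite /GRing.mul /=; have -> := fE s; by rewrite -expr2 sqr_sqrtr.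
pose X := \sum_(i < N | (i < l)%N) \sum_(j < N | (j < l)%N) dot (p i t - p j t) (V i t - V j t).
have dS : is_derive t 1 Sf (2 * X).
  rewrite /X mulr_sumr.
  apply: (is_derive_bigsum _ _ (fun i s => \sum_(j < N | (j < l)%N) dot (p i s - p j s) (p i s - p j s))) => i.
  rewrite mulr_sumr.
  apply: (is_derive_bigsum _ _ (fun j s => dot (p i s - p j s) (p i s - p j s))) => j.
  have H := is_derive_vB _ _ _ _ _ (pder i t t0) (pder j t t0).
  have H2 := is_derive_dot _ _ _ _ _ H H; cbv beta in H2 |- *.
  apply: is_derive_eq H2 _.
  by rewrite (dotC (_ - _) (p i t - p j t)); ring.
have df : is_derive t 1 f (derive1 f t) by rewrite derive1E; apply: derivableP.
have dff := is_deriveM df df.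
rewrite fSf in dff.
have fX : f t * derive1 f t = X.
  have E1 := @derive_val _ _ _ _ _ _ _ dS.
  have E2 := @derive_val _ _ _ _ _ _ _ dff.
  rewrite E1 in E2; move: E2; rewrite /GRing.scale /=; lra.
pose L := fun i : 'I_N => (i < l)%N.
pose a := fun i k : 'I_N => psi (enorm (q k t - q i t)).
pose G := fun i => Gvel g (p i t).
pose W1 := \sum_(i | L i) \sum_(j | L j) \sum_(k | L k) a i k * dot (p i t - p j t) (G k - G i).
pose W2 := \sum_(i | L i) \sum_(j | L j) \sum_(k | ~~ L k) a i k * dot (p i t - p j t) (G k - G i).
have XW : X = 2 * (c * (W1 + W2)).
  rewrite /X (@X_eq2W R d N L (fun i => p i t) (fun i => V i t)); congr (2 * _).
  rewrite /W1 /W2 -big_split mulr_sumr; apply: eq_bigr => i _.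
  rewrite -big_split mulr_sumr; apply: eq_bigr => j _ /=.
  rewrite dotV (bigID L) /=; congr (c * (_ + _)); apply: eq_bigr => k _; by rewrite dotBr.
have asym : forall i k, a i k = a k i by move=> i k; rewrite /a enormB.
have a0 : forall i k, 0 <= a i k by move=> i k; apply: psi0; exact: enorm_ge0.
have enP : forall i, 0 <= enorm (p i t) <= P0M by move=> i; rewrite enorm_ge0 maxp.
have glo : forall i, mG * enorm (p i t) <= g (enorm (p i t)).
  move=> i; have /andP[e0 e1] := enP i.
  have := gB _ _ (lexx 0) e0 e1; rewrite g0 !subr0 => /andP[] //.
have hD : forall i j, mG * dot (p i t - p j t) (p i t - p j t) <= dot (p i t - p j t) (G i - G j).
  move=> i j; apply: mono_vec; [exact: glo | exact: glo|].
  have /andP[ei0 ei1] := enP i; have /andP[ej0 ej1] := enP j.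
  have [hij|hji] := lerP (enorm (p j t)) (enorm (p i t)).
    have /andP[h1 _] := gB _ _ ej0 hij ei1.
    have hd : 0 <= enorm (p i t) - enorm (p j t) by rewrite subr_ge0.
    nra.
  have /andP[h1 _] := gB _ _ ei0 (ltW hji) ej1.
  have hd : 0 <= enorm (p j t) - enorm (p i t) by rewrite subr_ge0 ltW.
  nra.
have hD0 : forall i j, 0 <= dot (p i t - p j t) (G i - G j).
  move=> i j; apply: le_trans (hD i j); apply: mulr_ge0; [exact: ltW | exact: dot_ge0].
pose SD := \sum_(i | L i) \sum_(k | L k) a i k * dot (p i t - p k t) (G i - G k).
have W1E : 2 * W1 = - l%:R * SD.
  have := @W1_eq R d N L (fun i => p i t) G a asym.
  by rewrite -/W1 -/SD /L count_lt.
have nQ0 : 0 <= nQ by exact: sqrtr_ge0.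
have nP0 : 0 <= nP by exact: sqrtr_ge0.
have nQb : forall i k, L i -> L k -> enorm (q k t - q i t) <= nQ.
  move=> i k Li Lk.
  have -> : enorm (q k t - q i t) = Num.sqrt (enorm (q k t - q i t) ^+ 2).
    by rewrite sqrtr_sqr ger0_norm // enorm_ge0.
  rewrite /nQ /normS.
  rewrite ler_sqrt; last by apply: sumr_ge0 => ? _; apply: sumr_ge0 => ? _; exact: sqr_ge0.
  apply: le_trans (@term_le_sum R N L (fun i' => \sum_(j < N | (j < l)%N) enorm (q i' t - q j t) ^+ 2) k _ Lk).
    exact: (@term_le_sum R N L (fun j => enorm (q k t - q j t) ^+ 2) i (fun _ _ => sqr_ge0 _) Li).
  by move=> ? _; apply: sumr_ge0 => ? _; exact: sqr_ge0.
have SfnP : Sf t = nP ^+ 2 by rewrite /nP -/(f t) fE sqr_sqrtr.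
have SDb : psi nQ * calM * (nP ^+ 2) <= SD.
  rewrite -SfnP /Sf /SD mulr_sumr; apply: ler_sum => i Li; rewrite mulr_sumr; apply: ler_sum => k Lk.
  have ha : psi nQ <= a i k by apply: psimono => //; [exact: enorm_ge0 | exact: nQb].
  have hp : 0 <= psi nQ by exact: psi0.
  have := hD i k; have := dot_ge0 (p i t - p k t); have := a0 i k.
  have := mG0; have := calMmG.
  move: (dot (p i t - p k t) (p i t - p k t)) (dot (p i t - p k t) (G i - G k)) => x y.
  move=> h1 h2 h3 h4 h5.
  have e1 : 0 <= psi nQ * x * (mG - calM) by rewrite mulr_ge0 ?mulr_ge0 // subr_ge0.
  have e2 : 0 <= (a i k - psi nQ) * (mG * x) by rewrite mulr_ge0 ?mulr_ge0 ?subr_ge0 // ltW.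
  have e3 : 0 <= a i k * (y - mG * x) by rewrite mulr_ge0 // subr_ge0.
  nra.
pose Gb := MG * P0M.
have Gb0 : 0 <= Gb by rewrite mulr_ge0 // ltW.
have hG : forall i, enorm (G i) <= Gb.
  move=> i; have /andP[e0 e1] := enP i.
  have [gle gp] := gmon _ _ e0 e1.
  rewrite /G enorm_Gvel //; last by case: (gmon _ _ (lexx 0) e0).
  apply: le_trans gle _.
  have := gB _ _ (lexx 0) P0M0 (lexx P0M); rewrite g0 !subr0 => /andP[_ //].
pose Bk k := \sum_(i | L i) \sum_(j | L j) `|a i k - a j k| * enorm (p i t - p j t).
have W2b : forall Bd, 0 <= Bd -> (forall k, ~~ L k -> Bk k <= Bd) ->
    2 * W2 <= (N - l)%:R * ((Gb + Gb) * Bd).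
  move=> Bd Bd0 hB.
  rewrite /W2 (@exch3 R N L _ (fun k => ~~ L k)) mulr_sumr -(@count_ge R N l hlN) mulr_suml.
  apply: ler_sum => k Lk; rewrite mul1r.
  apply: le_trans (@Tk_bound R d N L (fun i => p i t) G a k Gb _ (fun i _ => hG i) (hG k)) _.
    move=> i j _ _; apply: mulr_ge0; [exact: a0 | exact: hD0].
  apply: ler_wpM2l; first exact: addr_ge0.
  exact: hB.
have Xb : forall Bd, 0 <= Bd -> (forall k, ~~ L k -> Bk k <= Bd) ->
    X <= c * (- l%:R * (psi nQ * calM * nP ^+ 2)) + c * ((N - l)%:R * ((Gb + Gb) * Bd)).
  move=> Bd Bd0 hB; rewrite XW.
  have -> : 2 * (c * (W1 + W2)) = c * (2 * W1) + c * (2 * W2) by ring.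
  apply: lerD; apply: ler_wpM2l; try exact: ltW.
    rewrite W1E !mulNr lerN2; apply: ler_wpM2l => //; exact: ler0n.
  exact: W2b.
have fneg : f t = 0 -> derive1 f t <= 0.
  move=> ft0; rewrite leNgt; apply/negP => hpos.
  have dnf := is_deriveN df.
  have [del del0 Hd] := @deriv_neg_left R (- f) t _ dnf ltac:(by rewrite oppr_lt0).
  have := Hd (del / 2) ltac:(apply/andP; split; lra).
  rewrite /GRing.opp /= ft0 oppr0 oppr_gt0 ltNge f0 //.
have final : forall R1, 0 <= R1 - (- (kappa * calM * l%:R / N%:R) * psi nQ * nP) ->
    X <= nP * R1 -> derive1 f t <= R1.
  move=> R1 hR1 hX.
  have [nz|np] := eqVneq nP 0.
    apply: le_trans (fneg nz) _; move: hR1; rewrite nz mulr0 subr0 //.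
  have np' : 0 < nP by rewrite lt_def np nP0.
  by rewrite -(ler_pM2l np') [X in X <= _]fX.
pose qm := qmin l (fun i => q i t).
pose Lp := Lpsi psi qm.
have [L0 hL0] := psilip.
pose Z := [set z | exists r s : R, [/\ qm <= r, qm <= s, r <> s & z = `|(psi r - psi s) / (r - s)|]].
have Zne : Z !=set0.
  exists `|(psi qm - psi (qm + 1)) / (qm - (qm + 1))|; exists qm, (qm + 1); split => //; try lra.
have Lp0 : 0 <= Lp.
  have [hub|hub] := pselect (has_ubound Z).
    have [z Zz] := Zne; apply: le_trans (ub_le_sup hub Zz).
    by case: Zz => r [s [_ _ _ ->]].
  rewrite /Lp /Lpsi -/Z sup_out //; by case.
have qmle : forall i k, L i -> ~~ L k -> qm <= enorm (q k t - q i t).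
  move=> i k Li Lk; rewrite enormB; apply: ge_inf.
    by exists 0 => z [i' _ [k' _ <-]]; exact: enorm_ge0.
  by exists i => //; exists k => //=; rewrite leqNgt.
have qm0 : forall k, ~~ L k -> 0 <= qm.
  move=> k Lk; apply: lb_le_inf.
    have i0 : (0 < N)%N by [].
    exists (enorm (q (Ordinal i0) t - q k t)); exists (Ordinal i0) => //=.
    by exists k => //=; rewrite leqNgt.
  by move=> z [i' _ [k' _ <-]]; exact: enorm_ge0.
have Lip : forall r s, 0 <= qm -> qm <= r -> qm <= s -> `|psi r - psi s| <= Lp * `|r - s|.
  move=> r s q0 hr hs; have [e|ne] := eqVneq r s.
    by rewrite e !subrr normr0 mulr0.
  have hub : has_ubound Z.
    exists L0 => z [r' [s' [h1 h2 h3 ->]]].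
    have nz : `|r' - s'| != 0 by rewrite normr_eq0 subr_eq0; apply/eqP.
    rewrite normrM normfV ler_pdivrMr ?lt_def ?nz ?normr_ge0 //.
    apply: hL0; lra.
  have Zz : Z `|(psi r - psi s) / (r - s)| by exists r, s; split => //; apply/eqP.
  have := ub_le_sup hub Zz; rewrite -/(Lpsi psi qm) -/Lp.
  have nz : `|r - s| != 0 by rewrite normr_eq0 subr_eq0.
  by rewrite normrM normfV ler_pdivrMr // lt_def nz normr_ge0.
have bound1 : forall k, ~~ L k -> Bk k <= Lp * (nQ * nP).
  move=> k Lk.
  apply: le_trans (_ : \sum_(i | L i) \sum_(j | L j) (Lp * enorm (q i t - q j t)) * enorm (p i t - p j t) <= _).
    apply: ler_sum => i Li; apply: ler_sum => j Lj; apply: ler_wpM2r; first exact: enorm_ge0.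
    apply: le_trans (Lip _ _ (qm0 k Lk) (qmle i k Li Lk) (qmle j k Lj Lk)) _.
    apply: ler_wpM2l => //; apply: le_trans (enorm_rev _ _) _.
    by rewrite opprB addrC subrKA enormB.
  have -> : \sum_(i | L i) \sum_(j | L j) (Lp * enorm (q i t - q j t)) * enorm (p i t - p j t) =
     Lp * \sum_(i | L i) \sum_(j | L j) enorm (q i t - q j t) * enorm (p i t - p j t).
    rewrite mulr_sumr; apply: eq_bigr => i _; rewrite mulr_sumr; apply: eq_bigr => j _.
    by rewrite mulrA.
  apply: ler_wpM2l => //.
  exact: (@CS2 R _ L (fun i j => enorm (q i t - q j t)) (fun i j => enorm (p i t - p j t))).
pose psm := psimax psi l (fun i => q i t).
have psm0 : 0 <= psm.
  rewrite /psm /psimax; elim/big_ind: _ => [//| x y hx hy | i _]; first by rewrite le_max hx.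
  elim/big_ind: _ => [//| x y hx hy | j _]; first by rewrite le_max hx.
  by apply: psi0; exact: enorm_ge0.
have aps : forall i k, L i -> ~~ L k -> a i k <= psm.
  move=> i k Li Lk; rewrite /a enormB /psm /psimax.
  apply: le_trans (le_bigmax_cond _ _ Li).
  by apply: le_bigmax_cond; rewrite leqNgt.
have bound2 : forall k, ~~ L k -> Bk k <= psm * (l%:R * nP).
  move=> k Lk.
  apply: le_trans (_ : \sum_(i | L i) \sum_(j | L j) psm * (1 * enorm (p i t - p j t)) <= _).
    apply: ler_sum => i Li; apply: ler_sum => j Lj; rewrite mul1r; apply: ler_wpM2r; first exact: enorm_ge0.
    have := aps i k Li Lk; have := aps j k Lj Lk; have := a0 i k; have := a0 j k.
    move=> *; rewrite ler_norml; apply/andP; split; lra.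
  have -> : \sum_(i | L i) \sum_(j | L j) psm * (1 * enorm (p i t - p j t)) =
     psm * \sum_(i | L i) \sum_(j | L j) 1 * enorm (p i t - p j t).
    by rewrite mulr_sumr; apply: eq_bigr => i _; rewrite mulr_sumr.
  apply: ler_wpM2l => //.
  apply: le_trans (@CS2 R _ L (fun i j => 1) (fun i j => enorm (p i t - p j t))) _.
  apply: ler_wpM2r => //.
  have -> : \sum_(i | L i) \sum_(j | L j) (1:R) ^+ 2 = l%:R ^+ 2.
    transitivity (\sum_(i < N | (i < l)%N) (1 * (l%:R : R))).
      apply: eq_bigr => i _; rewrite mul1r -(@count_lt R N l hlN).
      by apply: eq_bigr => j _; rewrite expr1n.
    by rewrite -mulr_suml count_lt // expr2.
  by rewrite sqrtr_sqr ger0_norm // ler0n.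
split.
- apply: final.
    rewrite addrAC subrr add0r; apply: mulr_ge0 => //; apply: mulr_ge0; last by rewrite invr_ge0 ler0n.
    by rewrite !mulr_ge0 // ?ler0n // ltW.
  + apply: le_trans (Xb (Lp * (nQ * nP)) _ bound1) _; first by rewrite !mulr_ge0.
    rewrite le_eqVlt; apply/orP; left; apply/eqP; rewrite /c /Gb /Lp /qm; ring.
- apply: final.
  + rewrite addrAC subrr add0r; apply: mulr_ge0; last exact: psm0.
    apply: mulr_ge0; last by rewrite invr_ge0 ler0n.
    by rewrite !mulr_ge0 ?ler0n // ltW.
  + apply: le_trans (Xb (psm * (l%:R * nP)) _ bound2) _; first by rewrite !mulr_ge0 // ler0n.
    have e1 : 0 <= c * ((N - l)%:R * ((Gb + Gb) * (psm * (l%:R * nP)))).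
      by rewrite !mulr_ge0 ?addr_ge0 ?ler0n // ltW.
    set R2 := (X in nP * X).
    have -> : nP * R2 = c * (- l%:R * (psi nQ * calM * nP ^+ 2)) +
       c * ((N - l)%:R * ((Gb + Gb) * (psm * (l%:R * nP)))) +
       c * ((N - l)%:R * ((Gb + Gb) * (psm * (l%:R * nP)))).
      by rewrite /R2 /c /Gb /psm; ring.
    lra.
Qed.
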